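(* (i) With respect to each of the classes $\mathcal{M}^{prob}$, $\mathcal{M}^{bel}$ and $\mathcal{M}^{poss}$, the languages $\mathcal{L}^E$ and $\mathcal{L}^{QU}$ are equally expressive: every formula of either language is equivalent (true in exactly the same structures of the class) to some formula of the other. (ii) With respect to $\mathcal{M}^{lp}$, $\mathcal{L}^E$ is strictly more expressive than $\mathcal{L}^{QU}$: every formula of $\mathcal{L}^{QU}$ is equivalent over $\mathcal{M}^{lp}$ to a formula of $\mathcal{L}^E$, but some formula of $\mathcal{L}^E$ (e.g. $e(p+q)>1/2$, suitably written with integer coefficients) is not equivalent over $\mathcal{M}^{lp}$ to any formula of $\mathcal{L}^{QU}$.
   Context: Fix a set $\Phi_0$ of primitive propositions. Propositional formulas are built from $\Phi_0$ by $\neg,\wedge$ (other connectives abbreviations); $\mathit{true}$ is a tautology and $\mathit{false}=\neg\mathit{true}$. A propositional gamble is an expression $b_1\phi_1+\cdots+b_n\phi_n$ ($b_i$ integers, $\phi_i$ propositional formulas); sums and integer multiples of propositional gambles are formed termwise and $\phi$ is identified with $1\phi$. $\mathcal{L}^E$: Boolean combinations of expectation inequalities $a_1e(\gamma_1)+\cdots+a_ke(\gamma_k)\ge b$ (integers $a_i,b$, propositional gambles $\gamma_i$). $\mathcal{L}^{QU}$: Boolean combinations of likelihood inequalities $a_1\ell(\phi_1)+\cdots+a_k\ell(\phi_k)\ge b$ (integers $a_i,b$, propositional formulas $\phi_i$). Abbreviations: $t\le b$ is $-t\ge -b$, $t>b$ is $\neg(t\le b)$, $t<b$ is $-t>-b$,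 $t=b$ is $t\ge b\wedge t\le b$. Structures: a probability structure $M=(W,\mathcal F,\mu,\pi)$ ($W$ nonempty set, $\mathcal F$ an algebra on $W$, $\mu$ a probability measure on $\mathcal F$, $\pi$ assigns each world a truth assignment to $\Phi_0$ with each $\{w:\pi(w)(p)=\text{true}\}\in\mathcal F$); a lower probability structure $(W,\mathcal F,\mathcal P,\pi)$ likewise with a set $\mathcal P$ of probability measures on $\mathcal F$; a belief structure $(W,\mathrm{Bel},\pi)$ with a belief function on $W$; a possibility structure $(W,\mathrm{Poss},\pi)$ with a possibility measure on $W$. $\mathcal M^{prob},\mathcal M^{lp},\mathcal M^{bel},\mathcal M^{poss}$ denote these classes. $[\![\phi]\!]_M$ is the set of worlds satisfying $\phi$; $[\![b_1\phi_1+\cdots+b_n\phi_n]\!]_M=\sum_ib_iX_{[\![\phi_i]\!]_M}$ ($X_U$ the indicator of $U$). For a finite-range gamble $X$ with values $x_1<\cdots<x_n$ and set function $\nu$, $C_\nu(X)=x_1+\sum_{i<n}(x_{i+1}-x_i)\nu(X>x_i)$. Semantics: $M\models\sum a_ie(\gamma_i)\ge b$ iff $\sum a_iE(\,[\![\gamma_i]\!]_M)\ge b$, where $E$ is $E_\mu$ (ordinary expectation), $\underline E_{\mathcal P}(X)=\inf_{\mu\in\mathcal P}E_\mu(X)$, $C_{\mathrm{Bel}}$, or $C_{\mathrm{Poss}}$ respectively; $M\models\sum a_i\ell(\phi_i)\ge b$ iff $\sum a_i\nu([\![\phi_i]\!]_M)\ge b$ where $\nu$ is $\mu$, $\mathcal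 P_*(U)=\inf_{\mu\in\mathcal P}\mu(U)$, $\mathrm{Bel}$, or $\mathrm{Poss}$ respectively. Boolean connectives are interpreted classically. Belief functions: $\mathrm{Bel}:2^W\to[0,1]$, $\mathrm{Bel}(\emptyset)=0$, $\mathrm{Bel}(W)=1$, $\mathrm{Bel}(\bigcup_{i=1}^nU_i)\ge\sum_{\emptyset\ne I\subseteq\{1..n\}}(-1)^{|I|+1}\mathrm{Bel}(\bigcap_{j\in I}U_j)$. Possibility measures: $\mathrm{Poss}(\emptyset)=0$, $\mathrm{Poss}(W)=1$, $\mathrm{Poss}(U\cup V)=\max(\mathrm{Poss}(U),\mathrm{Poss}(V))$. *)

(* Defs.v *)
From Stdlib Require Import Reals List ZArith Sorting.Sorted ClassicalEpsilon.
Import ListNotations.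
Set Implicit Arguments.
Open Scope R_scope.

Section Syntax.
Variable P : Type.

Inductive form : Type :=
| Prim : P -> form
| Neg : form -> form
| Conj : form -> form -> form.

(* propositional gamble b1 phi1 + ... + bn phin *)
Definition gamble : Type := list (Z * form).

(* L^E : Boolean combinations of  a1 e(g1) + ... + ak e(gk) >= b *)
Inductive eform : Type :=
| EGe : list (Z * gamble) -> Z -> eform
| ENot : eform -> eform
| EAnd : eform -> eform -> eform.

(* L^QU : Boolean combinations of  a1 l(phi1) + ... + ak l(phik) >= b *)
Inductive qform : Type :=
| QGe : list (Z * form) -> Z -> qform
| QNot : qform -> qform
| QAnd : qform -> qform -> qform.
End Syntax.

Arguments Prim {P}. Arguments Neg {P}. Arguments Conj {P}.
Arguments EGe {P}. Arguments ENot {P}. Arguments EAnd {P}.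
Arguments QGe {P}. Arguments QNot {P}. Arguments QAnd {P}.

Definition Rsum (l : list R) : R := fold_right Rplus 0 l.

Fixpoint holds {P W : Type} (pi : W -> P -> bool) (w : W) (f : form P) : bool :=
  match f with
  | Prim p => pi w p
  | Neg g => negb (holds pi w g)
  | Conj g h => holds pi w g && holds pi w h
  end.

Definition ext {P W : Type} (pi : W -> P -> bool) (f : form P) : W -> Prop :=
  fun w => holds pi w f = true.

Definition indicator {P W : Type} (pi : W -> P -> bool) (f : form P) (w : W) : R :=
  if holds pi w f then 1 else 0.

Definition gamble_fun {P W : Type} (pi : W -> P -> bool) (g : gamble P) : W -> R :=
  fun w => Rsum (map (fun bf => IZR (fst bf) * indicator pi (snd bf) w) g).

Fixpoint satE {P : Type} (ev : gamble P -> R) (f : eform P) : Prop :=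
  match f with
  | EGe ts b => Rsum (map (fun ag => IZR (fst ag) * ev (snd ag)) ts) >= IZR b
  | ENot g => ~ satE ev g
  | EAnd g h => satE ev g /\ satE ev h
  end.

Fixpoint satQ {P : Type} (lik : form P -> R) (f : qform P) : Prop :=
  match f with
  | QGe ts b => Rsum (map (fun af => IZR (fst af) * lik (snd af)) ts) >= IZR b
  | QNot g => ~ satQ lik g
  | QAnd g h => satQ lik g /\ satQ lik h
  end.

Definition is_range_list {W : Type} (X : W -> R) (l : list R) : Prop :=
  StronglySorted Rlt l /\ (forall x, In x l <-> exists w, X w = x).

(* the increasing list of values of X (exists and is unique when X has finite range) *)
Definition range_list {W : Type} (X : W -> R) : list R :=
  epsilon (inhabits nil) (is_range_list X).

Definition expect {W : Type} (mu : (W -> Prop) -> R) (X : W -> R) : R :=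
  Rsum (map (fun x => x * mu (fun w => X w = x)) (range_list X)).

Fixpoint csum {W : Type} (nu : (W -> Prop) -> R) (X : W -> R) (l : list R) : R :=
  match l with
  | x :: ((y :: _) as t) => (y - x) * nu (fun w => X w > x) + csum nu X t
  | _ => 0
  end.

Definition choquet {W : Type} (nu : (W -> Prop) -> R) (X : W -> R) : R :=
  match range_list X with
  | nil => 0
  | x1 :: _ => x1 + csum nu X (range_list X)
  end.

(* infimum of a (nonempty, bounded below) set of reals *)
Definition inf_R (S : R -> Prop) : R :=
  epsilon (inhabits 0) (fun r => (forall x, S x -> r <= x) /\
                                 (forall r', (forall x, S x -> r' <= x) -> r' <= r)).

Definition setT {W : Type} : W -> Prop := fun _ => True.
Definition set0 {W : Type} : W -> Prop := fun _ => False.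
Definition setU {W : Type} (U V : W -> Prop) : W -> Prop := fun w => U w \/ V w.
Definition setC {W : Type} (U : W -> Prop) : W -> Prop := fun w => ~ U w.

Definition is_algebra {W : Type} (F : (W -> Prop) -> Prop) : Prop :=
  F setT /\ (forall U, F U -> F (setC U)) /\ (forall U V, F U -> F V -> F (setU U V)).

Definition is_prob_measure {W : Type} (F : (W -> Prop) -> Prop) (mu : (W -> Prop) -> R) : Prop :=
  mu setT = 1 /\ (forall U, F U -> 0 <= mu U) /\
  (forall U V, F U -> F V -> (forall w, U w -> V w -> False) -> mu (setU U V) = mu U + mu V).

Definition pi_measurable {P W : Type} (F : (W -> Prop) -> Prop) (pi : W -> P -> bool) : Prop :=
  forall p : P, F (fun w => pi w p = true).

Record prob_structure (P : Type) := {
  pr_W : Type;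
  pr_W_nonempty : inhabited pr_W;
  pr_F : (pr_W -> Prop) -> Prop;
  pr_F_algebra : is_algebra pr_F;
  pr_mu : (pr_W -> Prop) -> R;
  pr_mu_prob : is_prob_measure pr_F pr_mu;
  pr_pi : pr_W -> P -> bool;
  pr_pi_meas : pi_measurable pr_F pr_pi }.

Record lp_structure (P : Type) := {
  lp_W : Type;
  lp_W_nonempty : inhabited lp_W;
  lp_F : (lp_W -> Prop) -> Prop;
  lp_F_algebra : is_algebra lp_F;
  lp_Pset : ((lp_W -> Prop) -> R) -> Prop;
  lp_Pset_nonempty : exists mu, lp_Pset mu;
  lp_Pset_prob : forall mu, lp_Pset mu -> is_prob_measure lp_F mu;
  lp_pi : lp_W -> P -> bool;
  lp_pi_meas : pi_measurable lp_F lp_pi }.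

Fixpoint subsets (l : list nat) : list (list nat) :=
  match l with
  | nil => [nil]
  | x :: t => map (cons x) (subsets t) ++ subsets t
  end.

Definition is_belief_function {W : Type} (Bel : (W -> Prop) -> R) : Prop :=
  (forall U, 0 <= Bel U <= 1) /\ Bel set0 = 0 /\ Bel setT = 1 /\
  (forall (n : nat) (U : nat -> W -> Prop), (1 <= n)%nat ->
     Bel (fun w => exists i, (i < n)%nat /\ U i w) >=
     Rsum (map (fun I => match I with
                         | nil => 0
                         | _ => (-1) ^ (length I + 1) * Bel (fun w => forall j, In j I -> U j w)
                         end) (subsets (seq 0 n)))).

Record bel_structure (P : Type) := {
  bl_W : Type;
  bl_W_nonempty : inhabited bl_W;
  bl_Bel : (bl_W -> Prop) -> R;
  bl_Bel_belief : is_belief_function bl_Bel;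
  bl_pi : bl_W -> P -> bool }.

Definition is_possibility_measure {W : Type} (Poss : (W -> Prop) -> R) : Prop :=
  (forall U, 0 <= Poss U <= 1) /\ Poss set0 = 0 /\ Poss setT = 1 /\
  (forall U V, Poss (setU U V) = Rmax (Poss U) (Poss V)).

Record poss_structure (P : Type) := {
  ps_W : Type;
  ps_W_nonempty : inhabited ps_W;
  ps_Poss : (ps_W -> Prop) -> R;
  ps_Poss_poss : is_possibility_measure ps_Poss;
  ps_pi : ps_W -> P -> bool }.

Definition satE_prob {P} (M : prob_structure P) (f : eform P) : Prop :=
  satE (fun g => expect (pr_mu M) (gamble_fun (pr_pi M) g)) f.
Definition satQ_prob {P} (M : prob_structure P) (f : qform P) : Prop :=
  satQ (fun phi => pr_mu M (ext (pr_pi M) phi)) f.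

Definition lower_expect {P} (M : lp_structure P) (X : lp_W M -> R) : R :=
  inf_R (fun x => exists mu, lp_Pset M mu /\ x = expect mu X).
Definition lower_prob {P} (M : lp_structure P) (U : lp_W M -> Prop) : R :=
  inf_R (fun x => exists mu, lp_Pset M mu /\ x = mu U).

Definition satE_lp {P} (M : lp_structure P) (f : eform P) : Prop :=
  satE (fun g => lower_expect M (gamble_fun (lp_pi M) g)) f.
Definition satQ_lp {P} (M : lp_structure P) (f : qform P) : Prop :=
  satQ (fun phi => lower_prob M (ext (lp_pi M) phi)) f.

Definition satE_bel {P} (M : bel_structure P) (f : eform P) : Prop :=
  satE (fun g => choquet (bl_Bel M) (gamble_fun (bl_pi M) g)) f.
Definition satQ_bel {P} (M : bel_structure P) (f : qform P) : Prop :=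
  satQ (fun phi => bl_Bel M (ext (bl_pi M) phi)) f.

Definition satE_poss {P} (M : poss_structure P) (f : eform P) : Prop :=
  satE (fun g => choquet (ps_Poss M) (gamble_fun (ps_pi M) g)) f.
Definition satQ_poss {P} (M : poss_structure P) (f : qform P) : Prop :=
  satQ (fun phi => ps_Poss M (ext (ps_pi M) phi)) f.

Definition QU_in_E {P C : Type} (sE : C -> eform P -> Prop) (sQ : C -> qform P -> Prop) : Prop :=
  forall g : qform P, exists f : eform P, forall M : C, sE M f <-> sQ M g.
Definition E_in_QU {P C : Type} (sE : C -> eform P -> Prop) (sQ : C -> qform P -> Prop) : Prop :=
  forall f : eform P, exists g : qform P, forall M : C, sE M f <-> sQ M g.

Definition equally_expressive {P C : Type} (sE : C -> eform P -> Prop) (sQ : C -> qform P -> Prop) : Prop :=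
  QU_in_E sE sQ /\ E_in_QU sE sQ.

(* Main.v *)
Require Import Defs.
From Stdlib Require Import Reals List ZArith.
From Stdlib Require Import Lra Lia Classical ClassicalEpsilon FunctionalExtensionality PropExtensionality Sorting.Sorted.
Import ListNotations.
Open Scope R_scope.

Lemma pred_ext {W : Type} (U V : W -> Prop) : (forall w, U w <-> V w) -> U = V.
Proof. intros H; apply functional_extensionality; intro w; apply propositional_extensionality; auto. Qed.

Lemma Rsum_cons x l : Rsum (x :: l) = x + Rsum l.
Proof. reflexivity. Qed.
Lemma Rsum_nil : Rsum nil = 0.
Proof. reflexivity. Qed.
Lemma Rsum_app l1 l2 : Rsum (l1 ++ l2) = Rsum l1 + Rsum l2.
Proof. induction l1; simpl; [ring|]. unfold Rsum in *; simpl; rewrite IHl1; ring. Qed.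
Lemma Rsum_scal {A} (c : R) (f : A -> R) l : Rsum (map (fun x => c * f x) l) = c * Rsum (map f l).
Proof. induction l; simpl; [unfold Rsum; simpl; ring|]. unfold Rsum in *; simpl; rewrite IHl; ring. Qed.

Fixpoint valZ {P W : Type} (pi : W -> P -> bool) (g : gamble P) (w : W) : Z :=
  match g with
  | nil => 0%Z
  | (b, f) :: g' => ((if holds pi w f then b else 0) + valZ pi g' w)%Z
  end.

Lemma gamble_fun_valZ {P W : Type} (pi : W -> P -> bool) g w :
  gamble_fun pi g w = IZR (valZ pi g w).
Proof.
  induction g as [|[b f] g IH]; [reflexivity|].
  unfold gamble_fun in *; simpl. unfold Rsum in *; simpl. rewrite IH.
  unfold indicator. destruct (holds pi w f); rewrite plus_IZR; ring.
Qed.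

Fixpoint lo {P : Type} (g : gamble P) : Z :=
  match g with nil => 0%Z | (b, _) :: g' => (Z.min b 0 + lo g')%Z end.
Fixpoint hi {P : Type} (g : gamble P) : Z :=
  match g with nil => 0%Z | (b, _) :: g' => (Z.max b 0 + hi g')%Z end.

Lemma valZ_bounds {P W : Type} (pi : W -> P -> bool) g w :
  (lo g <= valZ pi g w <= hi g)%Z.
Proof.
  induction g as [|[b f] g IH]; simpl; [lia|].
  destruct (holds pi w f); lia.
Qed.

Definition ffalse {P : Type} (f0 : form P) : form P := Conj f0 (Neg f0).
Definition fOr {P : Type} (a b : form P) : form P := Neg (Conj (Neg a) (Neg b)).

Fixpoint Fm {P : Type} (f0 : form P) (g : gamble P) (Q : Z -> bool) : form P :=
  match g with
  | nil => if Q 0%Z then Neg (ffalse f0) else ffalse f0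
  | (b, f) :: g' => fOr (Conj f (Fm f0 g' (fun z => Q (b + z)%Z))) (Conj (Neg f) (Fm f0 g' Q))
  end.

Lemma holds_Fm {P W : Type} (pi : W -> P -> bool) f0 g Q w :
  holds pi w (Fm f0 g Q) = Q (valZ pi g w).
Proof.
  revert Q; induction g as [|[b f] g IH]; intro Q; simpl.
  - destruct (Q 0%Z); simpl; destruct (holds pi w f0); reflexivity.
  - rewrite !IH. destruct (holds pi w f); simpl;
    try rewrite Z.add_0_r; repeat match goal with |- context [Q ?z] => destruct (Q z) end; reflexivity.
Qed.

Definition psis {P : Type} (g : gamble P) : list (form P) :=
  match g with
  | nil => nil
  | (_, f0) :: _ => map (fun k => Fm f0 g (fun z => Z.ltb (lo g + Z.of_nat k) z))
                        (seq 0 (Z.to_nat (hi g - lo g)))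
  end.

Section Meas.
Context {P W : Type} (F : (W -> Prop) -> Prop) (HF : is_algebra F) (pi : W -> P -> bool)
  (Hpi : pi_measurable F pi).

Lemma F_ext U V : F U -> (forall w, U w <-> V w) -> F V.
Proof. intros H E; rewrite <- (pred_ext U V E); auto. Qed.

Lemma F_setT' U : (forall w, U w) -> F U.
Proof. intros H; apply (F_ext setT); [apply HF|]. firstorder. Qed.
Lemma F_set0' U : (forall w, ~ U w) -> F U.
Proof. intros H; apply (F_ext (setC setT)); [apply HF, HF|]. unfold setC, setT; firstorder. Qed.
Lemma F_I U V : F U -> F V -> F (fun w => U w /\ V w).
Proof.
  intros HU HV. apply (F_ext (setC (setU (setC U) (setC V)))).
  - apply HF. apply HF; apply HF; auto.
  - intro w; unfold setC, setU; tauto.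
Qed.
Lemma F_ext_form f : F (ext pi f).
Proof.
  induction f as [p|f IH|f IH g IH'].
  - apply Hpi.
  - apply (F_ext (setC (ext pi f))); [apply HF; auto|].
    intro w; unfold setC, ext; simpl; destruct (holds pi w f); simpl; intuition congruence.
  - apply (F_ext (fun w => ext pi f w /\ ext pi g w)); [apply F_I; auto|].
    intro w; unfold ext; simpl; destruct (holds pi w f), (holds pi w g); simpl; intuition congruence.
Qed.
Lemma F_Q g : forall Q : Z -> bool, F (fun w => Q (valZ pi g w) = true).
Proof.
  induction g as [|[b f] g IH]; intro Q; simpl.
  - destruct (Q 0%Z). apply F_setT'; auto. apply F_set0'; congruence.
  - apply (F_ext (setU (fun w => ext pi f w /\ (fun z => Q (b + z)%Z) (valZ pi g w) = true)
                       (fun w => setC (ext pi f) w /\ Q (valZ pi g w) = true))).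
    + destruct HF as [HT [HC HU]]. apply HU; apply F_I.
      * apply F_ext_form.
      * apply (IH (fun z => Q (b + z)%Z)).
      * apply HC; apply F_ext_form.
      * apply IH.
    + intro w; unfold setU, setC, ext; simpl. destruct (holds pi w f); simpl; intuition congruence.
Qed.
End Meas.
Lemma SS_uniq (l1 l2 : list R) : StronglySorted Rlt l1 -> StronglySorted Rlt l2 ->
  (forall x, In x l1 <-> In x l2) -> l1 = l2.
Proof.
  revert l2; induction l1 as [|a t1 IH]; intros [|b t2] H1 H2 E.
  - reflexivity.
  - exfalso; apply (proj2 (E b)); simpl; auto.
  - exfalso; apply (proj1 (E a)); simpl; auto.
  - apply StronglySorted_inv in H1 as [H1 F1]. apply StronglySorted_inv in H2 as [H2 F2].
    rewrite Forall_forall in F1, F2.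
    assert (a = b).
    { assert (Ha : In a (b :: t2)) by (apply E; simpl; auto).
      assert (Hb : In b (a :: t1)) by (apply E; simpl; auto).
      destruct Ha as [Ha|Ha]; auto. destruct Hb as [Hb|Hb]; auto.
      apply F2 in Ha; apply F1 in Hb; lra. }
    subst b. f_equal. apply IH; auto.
    intro x; split; intro Hx.
    + assert (In x (a :: t2)) as [->|?] by (apply E; simpl; auto); auto.
      apply F1 in Hx; lra.
    + assert (In x (a :: t1)) as [->|?] by (apply E; simpl; auto); auto.
      apply F2 in Hx; lra.
Qed.

Lemma SS_filter (f : R -> bool) l : StronglySorted Rlt l -> StronglySorted Rlt (filter f l).
Proof.
  induction l as [|a t IH]; intro H; simpl; [constructor|].
  apply StronglySorted_inv in H as [H Fa].
  destruct (f a); auto. constructor; auto.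
  rewrite Forall_forall in *. intros x Hx. apply filter_In in Hx. apply Fa, Hx.
Qed.

Lemma range_list_eq {W : Type} (X : W -> R) l : is_range_list X l -> range_list X = l.
Proof.
  intro H. unfold range_list.
  pose proof (epsilon_spec (inhabits nil) (is_range_list X) (ex_intro _ l H)) as H2.
  destruct H as [S1 M1]; destruct H2 as [S2 M2].
  apply SS_uniq; auto. intro x; rewrite M1, M2; tauto.
Qed.

Definition Gl {W : Type} (nu : (W -> Prop) -> R) (X : W -> R) (L : list R) : R :=
  match L with nil => 0 | x1 :: _ => x1 + csum nu X L end.

Section LemA.
Context {W : Type} (X : W -> R).
Definition att (x : R) : Prop := exists w, X w = x.
Definition attb (x : R) : bool := if excluded_middle_informative (att x) then true else false.
Definition filt (L : list R) := filter attb L.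
Lemma filt_att x t : att x -> filt (x :: t) = x :: filt t.
Proof. intro H; unfold filt; simpl; unfold attb at 1; destruct (excluded_middle_informative _); tauto. Qed.
Lemma filt_natt x t : ~ att x -> filt (x :: t) = filt t.
Proof. intro H; unfold filt; simpl; unfold attb at 1; destruct (excluded_middle_informative _); tauto. Qed.

Lemma filt_range L : StronglySorted Rlt L -> (forall w, In (X w) L) -> is_range_list X (filt L).
Proof.
  intros HS HC. split; [apply SS_filter; auto|].
  intro x; unfold filt; rewrite filter_In; unfold attb.
  destruct (excluded_middle_informative (att x)) as [Ha|Ha]; split; intuition try discriminate.
  destruct Ha as [w <-]; auto.
Qed.

Context (nu : (W -> Prop) -> R)
  (nu1 : forall U, (forall w, U w) -> nu U = 1)
  (nu0 : forall U, (forall w, ~ U w) -> nu U = 0).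

Lemma nu_ext U V : (forall w, U w <-> V w) -> nu U = nu V.
Proof. intro H; rewrite (pred_ext U V H); reflexivity. Qed.

Lemma csum_remove a b t : ~ att b -> StronglySorted Rlt (a :: b :: t) ->
  (forall w, X w <= a \/ In (X w) (b :: t)) ->
  csum nu X (a :: b :: t) = csum nu X (a :: t).
Proof.
  intros Hb HS Hc. destruct t as [|c t].
  - simpl. rewrite (nu0 (fun w => X w > a)); [ring|].
    intros w Hw. destruct (Hc w) as [H|[H|[]]]; [lra|]. apply Hb; exists w; auto.
  - apply StronglySorted_inv in HS as [HS Fa]. apply StronglySorted_inv in HS as [HS Fb].
    rewrite Forall_forall in Fa, Fb.
    assert (Hab : a < b) by (apply Fa; simpl; auto).
    simpl. rewrite (nu_ext (fun w => X w > b) (fun w => X w > a)); [ring|].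
    intro w; split; intro H; [lra|].
    destruct (Hc w) as [H'|[H'|H']]; [lra| |].
    + exfalso; apply Hb; exists w; auto.
    + apply Fb in H'; lra.
Qed.

Lemma csum_filter n : forall rest a, (length rest <= n)%nat -> StronglySorted Rlt (a :: rest) ->
  (forall w, X w <= a \/ In (X w) rest) -> csum nu X (a :: rest) = csum nu X (a :: filt rest).
Proof.
  induction n as [|n IH]; intros rest a Hl HS Hc.
  - destruct rest; [reflexivity|simpl in Hl; lia].
  - destruct rest as [|b t]; [reflexivity|].
    destruct (classic (att b)) as [Hb|Hb].
    + rewrite filt_att by auto.
      change (csum nu X (a :: b :: t)) with ((b - a) * nu (fun w => X w > a) + csum nu X (b :: t)).
      change (csum nu X (a :: b :: filt t)) with ((b - a) * nu (fun w => X w > a) + csum nu X (b :: filt t)).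
      f_equal. apply StronglySorted_inv in HS as [HS Fa]. rewrite Forall_forall in Fa.
      assert (Hab : a < b) by (apply Fa; simpl; auto).
      apply IH; auto. simpl in Hl; lia.
      intro w; destruct (Hc w) as [H|[H|H]]; auto; left; lra.
    + rewrite filt_natt by auto. rewrite csum_remove; auto.
      apply IH.
      * simpl in Hl; lia.
      * apply StronglySorted_inv in HS as [HS Fa]. apply StronglySorted_inv in HS as [HS Fb].
        inversion Fa; subst. constructor; auto.
      * intro w; destruct (Hc w) as [H|[H|H]]; auto. exfalso; apply Hb; exists w; auto.
Qed.

Lemma Gl_filter (Hw : inhabited W) L : StronglySorted Rlt L -> (forall w, In (X w) L) ->
  Gl nu X L = Gl nu X (filt L).
Proof.
  induction L as [|l t IH]; intros HS Hc; [reflexivity|].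
  destruct (classic (att l)) as [Hl|Hl].
  - rewrite filt_att by auto. unfold Gl. f_equal.
    apply (csum_filter (length t)); auto.
    intro w; destruct (Hc w) as [H|H]; auto; left; lra.
  - rewrite filt_natt by auto.
    apply StronglySorted_inv in HS as [HS Fl]. rewrite Forall_forall in Fl.
    assert (Hc' : forall w, In (X w) t).
    { intro w; destruct (Hc w) as [H|H]; auto. exfalso; apply Hl; exists w; auto. }
    rewrite <- IH; auto.
    destruct t as [|b t'].
    + destruct Hw as [w]; destruct (Hc' w).
    + simpl. rewrite (nu1 (fun w => X w > l)); [ring|].
      intro w. specialize (Hc' w). apply Fl in Hc'; lra.
Qed.

Lemma choquet_L (Hw : inhabited W) L : StronglySorted Rlt L -> (forall w, In (X w) L) ->
  choquet nu X = Gl nu X L.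
Proof.
  intros HS Hc. rewrite (Gl_filter Hw L HS Hc).
  change (choquet nu X) with (Gl nu X (range_list X)).
  rewrite (range_list_eq X (filt L)); auto. apply filt_range; auto.
Qed.
End LemA.
Lemma SS_map_seq (h : nat -> R) (Hh : forall i j, (i < j)%nat -> h i < h j) n :
  forall s, StronglySorted Rlt (map h (seq s n)).
Proof.
  induction n as [|n IH]; intro s; simpl; constructor; auto.
  rewrite Forall_forall; intros x Hx. apply in_map_iff in Hx as [k [<- Hk]].
  apply in_seq in Hk. apply Hh; lia.
Qed.

Lemma csum_seq {W : Type} (nu : (W -> Prop) -> R) (X : W -> R) (h : nat -> R)
  (Hh : forall k, h (S k) - h k = 1) n : forall s,
  csum nu X (map h (seq s (S n))) = Rsum (map (fun k => nu (fun w => X w > h k)) (seq s n)).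
Proof.
  induction n as [|n IH]; intro s; [reflexivity|].
  change (csum nu X (map h (seq s (S (S n))))) with
    ((h (S s) - h s) * nu (fun w => X w > h s) + csum nu X (map h (seq (S s) (S n)))).
  rewrite IH, Hh. change (seq s (S n)) with (s :: seq (S s) n). rewrite map_cons, Rsum_cons. ring.
Qed.

Section Grid.
Context {P W : Type} (pi : W -> P -> bool) (Hw : inhabited W)
  (nu : (W -> Prop) -> R)
  (nu1 : forall U, (forall w, U w) -> nu U = 1)
  (nu0 : forall U, (forall w, ~ U w) -> nu U = 0).

Definition gridh (g : gamble P) (k : nat) : R := IZR (lo g + Z.of_nat k).
Definition gridL (g : gamble P) : list R := map (gridh g) (seq 0 (S (Z.to_nat (hi g - lo g)))).

Lemma gridL_sorted g : StronglySorted Rlt (gridL g).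
Proof. apply SS_map_seq. intros i j H; unfold gridh; apply IZR_lt; lia. Qed.

Lemma gridL_cover g w : In (gamble_fun pi g w) (gridL g).
Proof.
  rewrite gamble_fun_valZ. unfold gridL. apply in_map_iff.
  pose proof (valZ_bounds pi g w).
  exists (Z.to_nat (valZ pi g w - lo g)). split.
  - unfold gridh. f_equal. lia.
  - apply in_seq. lia.
Qed.

Lemma choquet_grid_pred g : choquet nu (gamble_fun pi g) =
  IZR (lo g) + Rsum (map (fun k => nu (fun w => gamble_fun pi g w > gridh g k))
                         (seq 0 (Z.to_nat (hi g - lo g)))).
Proof.
  rewrite (choquet_L _ nu nu1 nu0 Hw (gridL g) (gridL_sorted g) (gridL_cover g)).
  unfold gridL. simpl (seq 0 _). rewrite map_cons. unfold Gl.
  rewrite <- (map_cons (gridh g) 0%nat).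
  change (0%nat :: seq 1 (Z.to_nat (hi g - lo g))) with (seq 0 (S (Z.to_nat (hi g - lo g)))).
  rewrite csum_seq. unfold gridh at 1. rewrite Z.add_0_r. reflexivity.
  intro k; unfold gridh. rewrite <- minus_IZR. replace (lo g + Z.of_nat (S k) - (lo g + Z.of_nat k))%Z with 1%Z by lia. reflexivity.
Qed.

Lemma choquet_grid g : choquet nu (gamble_fun pi g) =
  IZR (lo g) + Rsum (map (fun f => nu (ext pi f)) (psis g)).
Proof.
  rewrite choquet_grid_pred. f_equal.
  destruct g as [|[b f0] g']; [reflexivity|].
  unfold psis. rewrite map_map. f_equal.
  apply map_ext; intro k. apply nu_ext. intro w.
  unfold ext. rewrite holds_Fm, gamble_fun_valZ. unfold gridh.
  rewrite Z.ltb_lt. split; intro H; [apply lt_IZR; lra|apply IZR_lt in H; lra].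
Qed.

Lemma choquet_single f : choquet nu (gamble_fun pi [(1%Z, f)]) = nu (ext pi f).
Proof.
  rewrite choquet_grid. change (psis [(1%Z, f)]) with [Fm f [(1%Z, f)] (fun z => Z.ltb 0 z)].
  simpl lo. rewrite map_cons, Rsum_cons. simpl map. rewrite Rsum_nil. rewrite Rplus_0_l, Rplus_0_r.
  apply nu_ext; intro w. unfold ext. rewrite holds_Fm. simpl.
  destruct (holds pi w f); simpl; intuition congruence.
Qed.
End Grid.
Section Prob.
Context {W : Type} (F : (W -> Prop) -> Prop) (HF : is_algebra F)
  (mu : (W -> Prop) -> R) (Hmu : is_prob_measure F mu).

Lemma mu1 U : (forall w, U w) -> mu U = 1.
Proof. intro H. rewrite (pred_ext U setT); [apply Hmu|]. firstorder. Qed.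
Lemma mu0 U : (forall w, ~ U w) -> mu U = 0.
Proof.
  intro H. destruct HF as [HT [HC HU]]. destruct Hmu as [_ [_ Hadd]].
  assert (E : U = setC setT) by (apply pred_ext; unfold setC, setT; firstorder).
  assert (F0 : F U) by (rewrite E; auto).
  assert (E2 : setU U U = U) by (apply pred_ext; unfold setU; tauto).
  pose proof (Hadd U U F0 F0 (fun w h _ => H w h)) as A. rewrite E2 in A. lra.
Qed.

Context (X : W -> R) (HX : forall x, att X x -> F (fun w => X w = x) /\ F (fun w => X w > x)).

Lemma layer t : forall x, StronglySorted Rlt (x :: t) -> Forall (att X) (x :: t) ->
  (forall w, X w >= x -> In (X w) (x :: t)) ->
  Rsum (map (fun y => y * mu (fun w => X w = y)) (x :: t)) =
  x * mu (fun w => X w >= x) + csum mu X (x :: t).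
Proof.
  induction t as [|y t IH]; intros x HS Ha Hc.
  - simpl. rewrite (nu_ext mu (fun w => X w = x) (fun w => X w >= x)). reflexivity.
    intro w; split; intro H; [lra|]. destruct (Hc w H) as [H'|[]]; auto.
  - apply StronglySorted_inv in HS as [HS Fx]. rewrite Forall_forall in Fx.
    inversion Ha as [|? ? Hax Hat]; subst.
    rewrite map_cons, Rsum_cons. rewrite IH; auto.
    + change (csum mu X (x :: y :: t)) with ((y - x) * mu (fun w => X w > x) + csum mu X (y :: t)).
      assert (Hxy : x < y) by (apply Fx; simpl; auto).
      assert (E1 : mu (fun w => X w > x) = mu (fun w => X w >= y)).
      { apply nu_ext; intro w; split; intro H; [|lra].
        destruct (Hc w ltac:(lra)) as [H'|H']; [lra|].
        destruct H' as [H'|H']; [lra|]. apply StronglySorted_inv in HS as [_ Fy].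
        rewrite Forall_forall in Fy. apply Fy in H'; lra. }
      assert (E2 : mu (fun w => X w >= x) = mu (fun w => X w = x) + mu (fun w => X w > x)).
      { destruct Hmu as [_ [_ Hadd]]. destruct (HX x Hax) as [F1 F2].
        rewrite <- Hadd; auto. apply nu_ext; intro w; unfold setU; lra.
        intros w h1 h2; lra. }
      rewrite E2, <- E1. ring.
    + intros w Hw. assert (Hxy : x < y) by (apply Fx; simpl; auto).
      destruct (Hc w ltac:(lra)) as [H'|H']; [lra|auto].
Qed.

Lemma expect_choquet_gen (Hw : inhabited W) : is_range_list X (range_list X) ->
  expect mu X = choquet mu X.
Proof.
  intros [HS HM]. unfold expect, choquet.
  destruct (range_list X) as [|x t] eqn:ER.
  - destruct Hw as [w]. exfalso. apply (proj2 (HM (X w))). eauto.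
  - rewrite layer; auto.
    + rewrite mu1; [ring|]. intro w. assert (Hin : In (X w) (x :: t)) by (apply HM; eauto).
      destruct Hin as [<-|Hin]; [lra|]. apply StronglySorted_inv in HS as [_ Fx].
      rewrite Forall_forall in Fx. apply Fx in Hin; lra.
    + rewrite Forall_forall; intros y Hy. apply HM in Hy. exact Hy.
    + intros w _. apply HM; eauto.
Qed.
End Prob.

Lemma expect_choquet {P W : Type} (F : (W -> Prop) -> Prop) (HF : is_algebra F)
  (mu : (W -> Prop) -> R) (Hmu : is_prob_measure F mu) (pi : W -> P -> bool)
  (Hpi : pi_measurable F pi) (Hw : inhabited W) g :
  expect mu (gamble_fun pi g) = choquet mu (gamble_fun pi g).
Proof.
  apply (expect_choquet_gen F HF mu Hmu); auto.
  - intros x [w0 <-]. split.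
    + apply (F_ext F (fun w => Z.eqb (valZ pi g w0) (valZ pi g w) = true)).
      apply (F_Q F HF pi Hpi g (fun z => Z.eqb (valZ pi g w0) z)).
      intro w. rewrite !gamble_fun_valZ, Z.eqb_eq. split; intro H; [rewrite H; auto|].
      apply eq_IZR; auto.
    + apply (F_ext F (fun w => Z.ltb (valZ pi g w0) (valZ pi g w) = true)).
      apply (F_Q F HF pi Hpi g (fun z => Z.ltb (valZ pi g w0) z)).
      intro w. rewrite !gamble_fun_valZ, Z.ltb_lt. split; intro H; [apply IZR_lt in H; lra|].
      apply lt_IZR; lra.
  - rewrite (range_list_eq _ (filt (gamble_fun pi g) (gridL g))).
    + apply filt_range; [apply gridL_sorted|apply gridL_cover].
    + apply filt_range; [apply gridL_sorted|apply gridL_cover].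
Qed.

Lemma expect_grid {P W : Type} (F : (W -> Prop) -> Prop) (HF : is_algebra F)
  (mu : (W -> Prop) -> R) (Hmu : is_prob_measure F mu) (pi : W -> P -> bool)
  (Hpi : pi_measurable F pi) (Hw : inhabited W) g :
  expect mu (gamble_fun pi g) = IZR (lo g) + Rsum (map (fun f => mu (ext pi f)) (psis g)).
Proof.
  rewrite (expect_choquet F HF mu Hmu pi Hpi Hw). apply choquet_grid; auto.
  intros U HU; apply (mu1 F HF mu Hmu U HU). intros U HU; apply (mu0 F HF mu Hmu U HU).
Qed.

Lemma expect_single {P W : Type} (F : (W -> Prop) -> Prop) (HF : is_algebra F)
  (mu : (W -> Prop) -> R) (Hmu : is_prob_measure F mu) (pi : W -> P -> bool)
  (Hpi : pi_measurable F pi) (Hw : inhabited W) f :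
  expect mu (gamble_fun pi [(1%Z, f)]) = mu (ext pi f).
Proof.
  rewrite (expect_choquet F HF mu Hmu pi Hpi Hw). apply choquet_single; auto.
  intros U HU; apply (mu1 F HF mu Hmu U HU). intros U HU; apply (mu0 F HF mu Hmu U HU).
Qed.
Definition eterms {P : Type} (ts : list (Z * gamble P)) : list (Z * form P) :=
  flat_map (fun ag => map (fun f => (fst ag, f)) (psis (snd ag))) ts.
Definition econst {P : Type} (ts : list (Z * gamble P)) : Z :=
  fold_right (fun ag acc => (fst ag * lo (snd ag) + acc)%Z) 0%Z ts.
Fixpoint transE {P : Type} (f : eform P) : qform P :=
  match f with
  | EGe ts b => QGe (eterms ts) (b - econst ts)
  | ENot g => QNot (transE g)
  | EAnd g h => QAnd (transE g) (transE h)
  end.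
Fixpoint transQ {P : Type} (f : qform P) : eform P :=
  match f with
  | QGe ts b => EGe (map (fun af => (fst af, [(1%Z, snd af)])) ts) b
  | QNot g => ENot (transQ g)
  | QAnd g h => EAnd (transQ g) (transQ h)
  end.

Section Trans.
Context {P : Type} (ev : gamble P -> R) (lik : form P -> R).

Lemma trans_sum (Hid : forall g, ev g = IZR (lo g) + Rsum (map lik (psis g))) ts :
  Rsum (map (fun ag => IZR (fst ag) * ev (snd ag)) ts) =
  IZR (econst ts) + Rsum (map (fun af => IZR (fst af) * lik (snd af)) (eterms ts)).
Proof.
  induction ts as [|[a g] ts IH]; [simpl; unfold Rsum; simpl; ring|].
  unfold eterms; simpl flat_map. rewrite map_app, Rsum_app. fold (eterms ts).
  rewrite map_cons, Rsum_cons, IH, Hid. simpl econst. rewrite plus_IZR, mult_IZR.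
  rewrite map_map. simpl fst; simpl snd. rewrite (Rsum_scal (IZR a) lik). ring.
Qed.

Lemma transE_ok (Hid : forall g, ev g = IZR (lo g) + Rsum (map lik (psis g))) f :
  satE ev f <-> satQ lik (transE f).
Proof.
  induction f as [ts b|g IH|g IH h IH']; simpl.
  - rewrite (trans_sum Hid), minus_IZR. split; intro; lra.
  - tauto.
  - tauto.
Qed.

Lemma transQ_ok (Hid : forall f, ev [(1%Z, f)] = lik f) f :
  satE ev (transQ f) <-> satQ lik f.
Proof.
  induction f as [ts b|g IH|g IH h IH']; simpl.
  - rewrite map_map. simpl. erewrite map_ext; [reflexivity|]. intro a; simpl. rewrite Hid; reflexivity.
  - tauto.
  - tauto.
Qed.
End Trans.

Lemma bel_nu1 {W : Type} (B : (W -> Prop) -> R) : is_belief_function B ->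
  forall U, (forall w, U w) -> B U = 1.
Proof. intros H U HU. rewrite (pred_ext U setT); [apply H|]. firstorder. Qed.
Lemma bel_nu0 {W : Type} (B : (W -> Prop) -> R) : is_belief_function B ->
  forall U, (forall w, ~ U w) -> B U = 0.
Proof. intros H U HU. rewrite (pred_ext U set0); [apply H|]. unfold set0; firstorder. Qed.
Lemma poss_nu1 {W : Type} (B : (W -> Prop) -> R) : is_possibility_measure B ->
  forall U, (forall w, U w) -> B U = 1.
Proof. intros H U HU. rewrite (pred_ext U setT); [apply H|]. firstorder. Qed.
Lemma poss_nu0 {W : Type} (B : (W -> Prop) -> R) : is_possibility_measure B ->
  forall U, (forall w, ~ U w) -> B U = 0.
Proof. intros H U HU. rewrite (pred_ext U set0); [apply H|]. unfold set0; firstorder. Qed.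

Lemma part_prob (P : Type) : equally_expressive (@satE_prob P) (@satQ_prob P).
Proof.
  split.
  - intro g; exists (transQ g); intro M. unfold satE_prob, satQ_prob. apply transQ_ok.
    intro f. apply (expect_single (pr_F M)); destruct M; auto.
  - intro f; exists (transE f); intro M. unfold satE_prob, satQ_prob. apply transE_ok.
    intro g. apply (expect_grid (pr_F M)); destruct M; auto.
Qed.

Lemma part_bel (P : Type) : equally_expressive (@satE_bel P) (@satQ_bel P).
Proof.
  split.
  - intro g; exists (transQ g); intro M. unfold satE_bel, satQ_bel. apply transQ_ok.
    intro f. apply choquet_single; destruct M; simpl; auto.
    apply bel_nu1; auto. apply bel_nu0; auto.
  - intro f; exists (transE f); intro M. unfold satE_bel, satQ_bel. apply transE_ok.
    intro g. apply choquet_grid; destruct M; simpl; auto.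
    apply bel_nu1; auto. apply bel_nu0; auto.
Qed.

Lemma part_poss (P : Type) : equally_expressive (@satE_poss P) (@satQ_poss P).
Proof.
  split.
  - intro g; exists (transQ g); intro M. unfold satE_poss, satQ_poss. apply transQ_ok.
    intro f. apply choquet_single; destruct M; simpl; auto.
    apply poss_nu1; auto. apply poss_nu0; auto.
  - intro f; exists (transE f); intro M. unfold satE_poss, satQ_poss. apply transE_ok.
    intro g. apply choquet_grid; destruct M; simpl; auto.
    apply poss_nu1; auto. apply poss_nu0; auto.
Qed.

Lemma part_lp (P : Type) : QU_in_E (@satE_lp P) (@satQ_lp P).
Proof.
  intro g; exists (transQ g); intro M. unfold satE_lp, satQ_lp. apply transQ_ok.
  intro f. unfold lower_expect, lower_prob. f_equal. apply pred_ext; intro x.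
  split; intros [mu [Hm ->]]; exists mu; split; auto;
    rewrite (expect_single (lp_F M)); auto; destruct M; simpl in *; auto.
Qed.
Lemma inf_R_min (S : R -> Prop) m : S m -> (forall x, S x -> m <= x) -> inf_R S = m.
Proof.
  intros Hm Hlb. unfold inf_R.
  assert (Ex : exists r, (forall x, S x -> r <= x) /\ (forall r', (forall x, S x -> r' <= x) -> r' <= r)).
  { exists m; split; auto. }
  pose proof (epsilon_spec (inhabits 0) _ Ex) as [H1 H2].
  set (r := epsilon _ _) in *. apply H1 in Hm. apply H2 in Hlb. lra.
Qed.

Section Neg.
Context {P : Type} (p q : P) (Hpq : p <> q).

Definition Wq : Type := (bool * bool)%type.
Definition pi0 (w : Wq) (r : P) : bool :=
  if excluded_middle_informative (r = p) then fst w
  else if excluded_middle_informative (r = q) then snd w else false.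
Lemma pi0_p w : pi0 w p = fst w.
Proof. unfold pi0. destruct (excluded_middle_informative (p = p)); congruence. Qed.
Lemma pi0_q w : pi0 w q = snd w.
Proof.
  unfold pi0. destruct (excluded_middle_informative (q = p)); [congruence|].
  destruct (excluded_middle_informative (q = q)); congruence.
Qed.

Definition ind (w : Wq) (U : Wq -> Prop) : R := if excluded_middle_informative (U w) then 1 else 0.
Definition nm1 (U : Wq -> Prop) : R := ind (false, true) U.
Definition nm2 (U : Wq -> Prop) : R := / 2 * ind (true, true) U + / 2 * ind (false, false) U.
Definition nm3 (U : Wq -> Prop) : R := / 2 * ind (false, true) U + / 2 * ind (false, false) U.

Definition Ftr : (Wq -> Prop) -> Prop := fun _ => True.
Lemma Ftr_alg : is_algebra Ftr.
Proof. unfold is_algebra, Ftr; auto. Qed.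
Lemma pi0_meas : pi_measurable Ftr pi0.
Proof. intro r; exact I. Qed.

Lemma ind_T w : ind w setT = 1.
Proof. unfold ind; destruct (excluded_middle_informative _) as [_|n]; [auto|exfalso; apply n; exact I]. Qed.
Lemma ind_pos w U : 0 <= ind w U.
Proof. unfold ind; destruct (excluded_middle_informative _); lra. Qed.
Lemma ind_add w U V : (forall w, U w -> V w -> False) -> ind w (setU U V) = ind w U + ind w V.
Proof.
  intro D. unfold ind, setU.
  destruct (excluded_middle_informative (U w)), (excluded_middle_informative (V w)),
    (excluded_middle_informative (U w \/ V w)); try lra; try tauto.
  exfalso; eauto.
Qed.

Lemma mu1_prob : is_prob_measure Ftr nm1.
Proof.
  unfold nm1; split; [apply ind_T|split].
  - intros; apply ind_pos.
  - intros U V _ _ D; apply ind_add; auto.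
Qed.
Lemma mu2_prob : is_prob_measure Ftr nm2.
Proof.
  unfold nm2; split; [rewrite !ind_T; lra|split].
  - intros; pose proof (ind_pos (true,true) U); pose proof (ind_pos (false,false) U); lra.
  - intros U V _ _ D; rewrite !ind_add; auto; lra.
Qed.
Lemma mu3_prob : is_prob_measure Ftr nm3.
Proof.
  unfold nm3; split; [rewrite !ind_T; lra|split].
  - intros; pose proof (ind_pos (false,true) U); pose proof (ind_pos (false,false) U); lra.
  - intros U V _ _ D; rewrite !ind_add; auto; lra.
Qed.

Definition PS1 (m : (Wq -> Prop) -> R) : Prop := m = nm1 \/ m = nm2.
Definition PS2 (m : (Wq -> Prop) -> R) : Prop := m = nm1 \/ m = nm2 \/ m = nm3.

Lemma PS1_ne : exists m, PS1 m.
Proof. exists nm1; left; auto. Qed.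
Lemma PS2_ne : exists m, PS2 m.
Proof. exists nm1; left; auto. Qed.
Lemma PS1_prob m : PS1 m -> is_prob_measure Ftr m.
Proof. intros [->| ->]; [apply mu1_prob|apply mu2_prob]. Qed.
Lemma PS2_prob m : PS2 m -> is_prob_measure Ftr m.
Proof. intros [->|[->| ->]]; [apply mu1_prob|apply mu2_prob|apply mu3_prob]. Qed.

Definition M1 : lp_structure P :=
  {| lp_W := Wq; lp_W_nonempty := inhabits (true, true); lp_F := Ftr; lp_F_algebra := Ftr_alg;
     lp_Pset := PS1; lp_Pset_nonempty := PS1_ne; lp_Pset_prob := PS1_prob;
     lp_pi := pi0; lp_pi_meas := pi0_meas |}.
Definition M2 : lp_structure P :=
  {| lp_W := Wq; lp_W_nonempty := inhabits (true, true); lp_F := Ftr; lp_F_algebra := Ftr_alg;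
     lp_Pset := PS2; lp_Pset_nonempty := PS2_ne; lp_Pset_prob := PS2_prob;
     lp_pi := pi0; lp_pi_meas := pi0_meas |}.

Definition gpq : gamble P := [(1%Z, Prim p); (1%Z, Prim q)].

Lemma ind_b w (b : Wq -> bool) : ind w (fun w => b w = true) = if b w then 1 else 0.
Proof. unfold ind; destruct (excluded_middle_informative _), (b w); auto; congruence. Qed.

Lemma expect_gpq m : is_prob_measure Ftr m ->
  expect m (gamble_fun pi0 gpq) =
  m (fun w => Z.ltb 0 (valZ pi0 gpq w) = true) + m (fun w => Z.ltb 1 (valZ pi0 gpq w) = true).
Proof.
  intro Hm. rewrite (expect_grid Ftr Ftr_alg m Hm pi0 pi0_meas (inhabits (true,true))).
  change (psis gpq) with [Fm (Prim p) gpq (fun z => Z.ltb (0 + Z.of_nat 0) z);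
                          Fm (Prim p) gpq (fun z => Z.ltb (0 + Z.of_nat 1) z)].
  change (lo gpq) with 0%Z. cbn [map]. rewrite !Rsum_cons, Rsum_nil.
  rewrite (pred_ext (ext pi0 (Fm (Prim p) gpq (fun z => Z.ltb (0 + Z.of_nat 0) z)))
                    (fun w => Z.ltb 0 (valZ pi0 gpq w) = true)).
  rewrite (pred_ext (ext pi0 (Fm (Prim p) gpq (fun z => Z.ltb (0 + Z.of_nat 1) z)))
                    (fun w => Z.ltb 1 (valZ pi0 gpq w) = true)).
  ring.
  all: intro w; unfold ext; rewrite holds_Fm; reflexivity.
Qed.

Lemma valZ_gpq a b : valZ pi0 gpq (a, b) = ((if a then 1 else 0) + ((if b then 1 else 0) + 0))%Z.
Proof. simpl. rewrite pi0_p, pi0_q. reflexivity. Qed.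

Lemma E1 : expect nm1 (gamble_fun pi0 gpq) = 1.
Proof.
  rewrite expect_gpq by apply mu1_prob. unfold nm1. rewrite !ind_b, !valZ_gpq. simpl. lra.
Qed.
Lemma E2 : expect nm2 (gamble_fun pi0 gpq) = 1.
Proof.
  rewrite expect_gpq by apply mu2_prob. unfold nm2. rewrite !ind_b, !valZ_gpq. simpl. lra.
Qed.
Lemma E3 : expect nm3 (gamble_fun pi0 gpq) = / 2.
Proof.
  rewrite expect_gpq by apply mu3_prob. unfold nm3. rewrite !ind_b, !valZ_gpq. simpl. lra.
Qed.

Lemma LE1 : lower_expect M1 (gamble_fun pi0 gpq) = 1.
Proof.
  unfold lower_expect. apply inf_R_min.
  - exists nm1; split; [left; auto|]. simpl. rewrite E1; auto.
  - intros x [m [[->| ->] ->]]; simpl; [rewrite E1|rewrite E2]; lra.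
Qed.
Lemma LE2 : lower_expect M2 (gamble_fun pi0 gpq) = / 2.
Proof.
  unfold lower_expect. apply inf_R_min.
  - exists nm3; split; [right; right; auto|]. simpl. rewrite E3; auto.
  - intros x [m [[->|[->| ->]] ->]]; simpl; [rewrite E1|rewrite E2|rewrite E3]; lra.
Qed.

Lemma LP_eq (U : Wq -> Prop) : lower_prob M1 U = lower_prob M2 U.
Proof.
  unfold lower_prob. rewrite (inf_R_min _ (Rmin (nm1 U) (nm2 U))).
  symmetry; apply inf_R_min.
  - unfold Rmin; destruct (Rle_dec _ _); eexists; split; [left; reflexivity|reflexivity|
      right; left; reflexivity|reflexivity].
  - intros x [m [[->|[->| ->]] ->]]; simpl; [apply Rmin_l|apply Rmin_r|].
    unfold nm1, nm2, nm3, ind, Rmin.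
    destruct (excluded_middle_informative (U (false,true))), (excluded_middle_informative (U (true,true))),
      (excluded_middle_informative (U (false,false))); destruct (Rle_dec _ _); lra.
  - unfold Rmin; destruct (Rle_dec _ _); eexists; split; [left; reflexivity|reflexivity|
      right; reflexivity|reflexivity].
  - intros x [m [[->| ->] ->]]; simpl; [apply Rmin_l|apply Rmin_r].
Qed.

Lemma part_neg : ~ E_in_QU (@satE_lp P) (@satQ_lp P).
Proof.
  intro H. destruct (H (EGe [(1%Z, gpq)] 1%Z)) as [g Hg].
  pose proof (Hg M1) as A. pose proof (Hg M2) as B.
  assert (Eq : (fun phi => lower_prob M1 (ext (lp_pi M1) phi)) =
               (fun phi => lower_prob M2 (ext (lp_pi M2) phi))).
  { apply functional_extensionality; intro phi. apply LP_eq. }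
  unfold satQ_lp in A, B. rewrite Eq in A.
  unfold satE_lp in A, B. simpl in A, B.
  rewrite LE1 in A. rewrite LE2 in B.
  assert (S : satQ (fun phi : form P => lower_prob M2 (ext pi0 phi)) g) by (apply A; lra).
  apply B in S. lra.
Qed.
End Neg.

Theorem theorem4p1 (P : Type) :
  equally_expressive (@satE_prob P) (@satQ_prob P) /\
  equally_expressive (@satE_bel P) (@satQ_bel P) /\
  equally_expressive (@satE_poss P) (@satQ_poss P) /\
  QU_in_E (@satE_lp P) (@satQ_lp P) /\
  ((exists p q : P, p <> q) ->
     ~ E_in_QU (@satE_lp P) (@satQ_lp P)).
Proof.
  split; [apply part_prob|]. split; [apply part_bel|]. split; [apply part_poss|].
  split; [apply part_lp|]. intros [p [q Hpq]]. exact (part_neg p q Hpq).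
Qed.
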